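(* Let $\mathcal G$ be a weighted timed game and $\rho=(s_1,r_1)\xrightarrow{\delta_1}(s_2,r_2)\xrightarrow{\delta_2}\cdots\xrightarrow{\delta_n}(s_{n+1},r_{n+1})=(s_1,r_1)$ a cycle of the region automaton $\mathcal R(\mathcal G)$. Let $\overline\pi=(s_1,\nu_0)\xrightarrow{d_1,\delta_1}(s_2,\nu_1)\cdots\xrightarrow{d_n,\delta_n}(s_1,\nu_n)$ be a finite play of the closed game $\overline{\mathcal G}$ following $\overline\rho$ and jumping from corners to corners, with $\nu_0,\nu_n$ corners of $r_1$. Then for every $\varepsilon>0$ there exists a finite play $\pi$ of $\mathcal G$ following $\rho$ such that $|\omega(\pi)-\omega(\overline\pi)|\le\varepsilon$.
   Context: Clocks $X$, valuations $\nu\colon X\to\mathbb R_{\ge0}$, time elapse $\nu+d$, reset $\nu[Y\leftarrow0]$; guards are conjunctions of $x\bowtie c$ with ${\bowtie}\in\{\le,<,=,>,\ge\}$, $c\in\mathbb N$. A weighted timed game $\mathcal G=\langle S=S_{\mathrm{Min}}\uplus S_{\mathrm{Max}},S_T,\Delta,\omega\rangle$ has finite states, finite transitions $\Delta\subseteq S\times\mathrm{Guards}(X)\times2^X\times S$, weights $\omega\colon\Delta\uplus S\to\mathbb Z$, and clocks bounded by $M\in\mathbb N$ (every guard implies $\nu(x)\le M$ for all $x$). A step $(s,\nu)\xrightarrow{d,\delta}(s',\nu')$ with $\delta=(s,g,Y,s')$ requires $d\ge0$, $\nu+d\models g$, $\nu'=(\nu+d)[Y\leftarrow0]$, and has weight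 $d\,\omega(s)+\omega(\delta)$; the weight $\omega(\cdot)$ of a finite play is the sum of its step weights. Regions: standard Alur–Dill regions for clocks $X$ and constant $M$; $[\nu]$ is the region of $\nu$; $\overline r$ is the topological closure of $r$; the corners of $r$ are the valuations in $\overline r\cap\mathbb N^X$. The region automaton $\mathcal R(\mathcal G)$ has states $(s,r)$ and transitions $(s,r)\xrightarrow{\delta}(s',r')$, $\delta=(s,g,Y,s')$, if some $\nu\in r$, $d\ge0$ satisfy $\nu+d\models g$ and $(\nu+d)[Y\leftarrow0]\in r'$; a cycle is a path whose first and last states coincide. A play of $\mathcal G$ follows a path if it fires the same transitions and its successive configurations $(s,\nu)$ have $(s,[\nu])$ equal to the successive states of the path. The closed game $\overline{\mathcal G}$ is $\mathcal G$ with every strict inequality in guards replaced by the corresponding non-strict one. The play $\overline\pi$ of $\overline{\mathcal G}$ follows $\overline\rho$ and jumps from corners to corners if, for each $i\in\{1,\dots,n\}$, writing $\delta_i=(s_i,g_i,Y_i,s_{i+1})$, there is a region $r_i''$ such that some valuation of $r_i$ reaches $r_i''$ by time elapse, $r_i''$ satisfies $g_i$, $r_i''[Y_i\leftarrow0]=r_{i+1}$, and $\nu_{i-1}\in\overline{r_i}$, $\nu_{i-1}+d_i\in\overline{r_i''}$, $\nu_i\in\overline{r_{i+1}}$, with all valuations $\nu_{i-1},\nu_{i-1}+d_i,\nu_i$ in $\mathbb N^X$ (hence $\omega(\overline\pi)\in\mathbb Z$). *)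

(* Defs.v *)
(* clocks X and states S are abstract types (finiteness stated as
   hypotheses), valuations are X -> R (Stdlib reals). *)
From Stdlib Require Import Reals Lra List ZArith.
Open Scope R_scope.

Set Implicit Arguments.

Definition valuation (X : Type) := X -> R.

Definition elapse {X : Type} (v : valuation X) (d : R) : valuation X :=
  fun x => v x + d.
Definition reset {X : Type} (v : valuation X) (Y : X -> bool) : valuation X :=
  fun x => if Y x then 0 else v x.

Inductive cmp := CLt | CLe | CEq | CGe | CGt.

Definition guard (X : Type) := list (X * cmp * nat).

Definition sat_atom {X : Type} (v : valuation X) (a : X * cmp * nat) : Prop :=
  let '(x, o, c) := a in
  match o with
  | CLt => v x < INR c
  | CLe => v x <= INR c
  | CEq => v x = INR c
  | CGe => v x >= INR c
  | CGt => v x > INR c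
  end.

Definition sat {X : Type} (g : guard X) (v : valuation X) : Prop :=
  forall a, In a g -> sat_atom v a.

Definition close_cmp (o : cmp) : cmp :=
  match o with CLt => CLe | CGt => CGe | o => o end.
Definition close_guard {X : Type} (g : guard X) : guard X :=
  map (fun '(x, o, c) => (x, close_cmp o, c)) g.

Record trans (X St : Type) := Trans {
  tsrc : St; tguard : guard X; treset : X -> bool; tdst : St }.

(* weighted timed game; the partition S = S_Min + S_Max is given by [is_min],
   targets by [is_target]; [bound] is the clock bound M *)
Record wtg (X St : Type) := WTG {
  is_min : St -> bool;
  is_target : St -> bool;
  Delta : list (trans X St);
  wtrans : trans X St -> Z;
  wstate : St -> Z;
  bound : nat }.

Definition well_formed {X St : Type} (G : wtg X St) : Prop :=
  (exists l : list St, forall s, In s l) /\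
  (forall t, In t (Delta G) -> forall v, sat (tguard t) v ->
     forall x, v x <= INR (bound G)).

Definition floorR (a : R) : Z := Int_part a.
Definition fracR (a : R) : R := frac_part a.

Definition nonneg {X : Type} (v : valuation X) : Prop := forall x, 0 <= v x.

Definition region_equiv {X : Type} (M : nat) (v v' : valuation X) : Prop :=
  (forall x,
     (v x > INR M /\ v' x > INR M) \/
     (floorR (v x) = floorR (v' x) /\ (fracR (v x) = 0 <-> fracR (v' x) = 0))) /\
  (forall x y, v x <= INR M -> v y <= INR M ->
     (fracR (v x) <= fracR (v y) <-> fracR (v' x) <= fracR (v' y))).

Definition region (X : Type) := valuation X -> Prop.

Definition is_region {X : Type} (M : nat) (r : region X) : Prop :=
  exists v, nonneg v /\ forall v', r v' <-> (nonneg v' /\ region_equiv M v v').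

Definition closure {X : Type} (r : region X) (v : valuation X) : Prop :=
  forall e, e > 0 -> exists v', r v' /\ forall x, Rabs (v x - v' x) < e.

Definition integral {X : Type} (v : valuation X) : Prop :=
  forall x, exists k : nat, v x = INR k.

Definition corner {X : Type} (r : region X) (v : valuation X) : Prop :=
  closure r v /\ integral v.

Definition region_trans {X St : Type} (G : wtg X St)
  (s : St) (r : region X) (t : trans X St) (s' : St) (r' : region X) : Prop :=
  In t (Delta G) /\ tsrc t = s /\ tdst t = s' /\
  exists v d, r v /\ d >= 0 /\ sat (tguard t) (elapse v d) /\
              r' (reset (elapse v d) (treset t)).

Definition is_cycle {X St : Type} (G : wtg X St) (n : nat)
  (s : nat -> St) (r : nat -> region X) (t : nat -> trans X St) : Prop :=
  (forall i, (i <= n)%nat -> is_region (bound G) (r i)) /\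
  (forall i, (i < n)%nat -> region_trans G (s i) (r i) (t i) (s (S i)) (r (S i))) /\
  s n = s O /\ r n = r O.

Definition step_guard {X St : Type} (closed : bool) (t : trans X St) : guard X :=
  if closed then close_guard (tguard t) else tguard t.

Definition step {X St : Type} (G : wtg X St) (closed : bool)
  (s : St) (v : valuation X) (d : R) (t : trans X St) (s' : St) (v' : valuation X) : Prop :=
  In t (Delta G) /\ tsrc t = s /\ tdst t = s' /\ d >= 0 /\
  sat (step_guard closed t) (elapse v d) /\ v' = reset (elapse v d) (treset t).

Definition is_play {X St : Type} (G : wtg X St) (closed : bool) (n : nat)
  (s : nat -> St) (t : nat -> trans X St) (nu : nat -> valuation X) (d : nat -> R) : Prop :=
  forall i, (i < n)%nat -> step G closed (s i) (nu i) (d i) (t i) (s (S i)) (nu (S i)).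

Fixpoint play_weight {X St : Type} (G : wtg X St) (n : nat)
  (s : nat -> St) (t : nat -> trans X St) (d : nat -> R) : R :=
  match n with
  | O => 0
  | S m => play_weight G m s t d + (d m * IZR (wstate G (s m)) + IZR (wtrans G (t m)))
  end.

Definition follows {X : Type} (n : nat) (r : nat -> region X) (nu : nat -> valuation X) : Prop :=
  forall i, (i <= n)%nat -> r i (nu i).

Definition follows_corners {X St : Type} (G : wtg X St) (n : nat)
  (r : nat -> region X) (t : nat -> trans X St) (nu : nat -> valuation X) (d : nat -> R) : Prop :=
  forall i, (i < n)%nat ->
    exists r'' : region X,
      is_region (bound G) r'' /\
      (exists v e, r i v /\ e >= 0 /\ r'' (elapse v e)) /\
      (forall v, r'' v -> sat (tguard (t i)) v) /\
      (forall v', r (S i) v' <-> exists v, r'' v /\ v' = reset v (treset (t i))) /\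
      closure (r i) (nu i) /\ closure r'' (elapse (nu i) (d i)) /\
      closure (r (S i)) (nu (S i)) /\
      integral (nu i) /\ integral (elapse (nu i) (d i)) /\ integral (nu (S i)).

(* Main.v *)
Require Import Defs.
From Stdlib Require Import Reals List ZArith Lra Lia.
From Stdlib Require Import FunctionalExtensionality Classical.
Open Scope R_scope.


Lemma fl_base (a : R) : IZR (floorR a) <= a /\ a < IZR (floorR a) + 1.
Proof. unfold floorR. destruct (base_Int_part a). lra. Qed.

Lemma fr_def (a : R) : fracR a = a - IZR (floorR a).
Proof. reflexivity. Qed.

Lemma ip_eq (a : R) (z : Z) : IZR z <= a -> a < IZR z + 1 -> floorR a = z.
Proof.
  intros H1 H2. destruct (fl_base a) as [B1 B2].
  set (m := floorR a) in *.
  assert (Hlt1 : (z < m + 1)%Z). { apply lt_IZR. rewrite plus_IZR. lra. }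
  assert (Hlt2 : (m < z + 1)%Z). { apply lt_IZR. rewrite plus_IZR. lra. }
  lia.
Qed.

Lemma fr_eq (a : R) (z : Z) : IZR z <= a -> a < IZR z + 1 -> fracR a = a - IZR z.
Proof. intros H1 H2. rewrite fr_def, (ip_eq a z H1 H2). reflexivity. Qed.

Lemma IZR_lt_S (f m : Z) : IZR f < IZR m -> IZR f + 1 <= IZR m.
Proof. intro H. apply lt_IZR in H. rewrite <- plus_IZR. apply IZR_le. lia. Qed.

Lemma INR_pos_ge1 (k : nat) : 0 < INR k -> 1 <= INR k.
Proof. intro H. destruct k. { simpl in H. lra. } rewrite S_INR. pose proof (pos_INR k). lra. Qed.

Section S_H1.
Variable X : Type.

Definition strong_equiv (v w : valuation X) : Prop :=
  (forall x, floorR (v x) = floorR (w x) /\ (fracR (v x) = 0 <-> fracR (w x) = 0)) /\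
  (forall x y, fracR (v x) <= fracR (v y) <-> fracR (w x) <= fracR (w y)).

Lemma region_mem (M : nat) (r : region X) v w :
  is_region M r -> r v -> strong_equiv v w -> Defs.nonneg w -> r w.
Proof.
  intros [b [Hb Hr]] Hv [S1 S2] Hw.
  apply Hr. apply Hr in Hv. destruct Hv as [_ [E1 E2]].
  split; [exact Hw|]. split.
  - intro x. destruct (S1 x) as [F1 F2].
    destruct (E1 x) as [[A1 A2]|[A1 A2]].
    + left. split; [exact A1|].
      destruct (fl_base (v x)) as [V1 V2]. destruct (fl_base (w x)) as [W1 W2].
      rewrite F1 in V1, V2.
      rewrite INR_IZR_INZ in *.
      destruct (Rle_or_lt (w x) (IZR (Z.of_nat M))) as [Hle|]; [|assumption].
      exfalso.
      destruct (Rlt_or_le (IZR (floorR (w x))) (IZR (Z.of_nat M))) as [Hl|Hl].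
      * apply IZR_lt_S in Hl. lra.
      * assert (Hwx : w x = IZR (floorR (w x))) by lra.
        assert (fracR (w x) = 0) by (rewrite fr_def; lra).
        apply F2 in H. rewrite fr_def, F1 in H. lra.
    + right. split; [congruence|]. tauto.
  - intros x y Hx Hy. rewrite (E2 x y Hx Hy). apply S2.
Qed.

Lemma bnd_le (M : nat) (b w : R) :
  (b > INR M /\ w > INR M) \/ (floorR b = floorR w /\ (fracR b = 0 <-> fracR w = 0)) ->
  w <= INR M -> floorR b = floorR w /\ (fracR b = 0 <-> fracR w = 0) /\ b <= INR M.
Proof.
  intros [[A1 A2]|[A1 A2]] Hw; [lra|].
  split; [exact A1|]. split; [exact A2|].
  destruct (fl_base b) as [B1 B2]. destruct (fl_base w) as [W1 W2].
  rewrite A1 in B1, B2. rewrite INR_IZR_INZ in *.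
  destruct (Rle_or_lt b (IZR (Z.of_nat M))) as [|Hb]; [assumption|].
  exfalso.
  destruct (Rlt_or_le (IZR (floorR w)) (IZR (Z.of_nat M))) as [Hl|Hl].
  - apply IZR_lt_S in Hl. lra.
  - assert (fracR w = 0) by (rewrite fr_def; lra).
    apply A2 in H. rewrite fr_def, A1 in H. lra.
Qed.

Lemma same_region_strong (M : nat) (r : region X) v w :
  is_region M r -> r v -> r w -> (forall x, v x <= INR M) -> (forall x, w x <= INR M) ->
  strong_equiv v w.
Proof.
  intros [b [Hb Hr]] Hv Hw Bv Bw.
  apply Hr in Hv. apply Hr in Hw. destruct Hv as [_ [V1 V2]]. destruct Hw as [_ [W1 W2]].
  assert (Kv : forall x, floorR (b x) = floorR (v x) /\ (fracR (b x) = 0 <-> fracR (v x) = 0) /\ b x <= INR M)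
    by (intro x; apply bnd_le; auto).
  assert (Kw : forall x, floorR (b x) = floorR (w x) /\ (fracR (b x) = 0 <-> fracR (w x) = 0) /\ b x <= INR M)
    by (intro x; apply bnd_le; auto).
  split.
  - intro x. destruct (Kv x) as [A1 [A2 _]]. destruct (Kw x) as [C1 [C2 _]].
    split; [congruence|tauto].
  - intros x y. destruct (Kv x) as [_ [_ Bx]]. destruct (Kv y) as [_ [_ By]].
    rewrite <- (V2 x y Bx By). apply W2; auto.
Qed.

End S_H1.
Arguments strong_equiv {X}. Arguments region_mem {X}. Arguments same_region_strong {X}.


Definition kap (a : R) : R := if Rle_dec 0 a then a else 1 + a.

Lemma clock_small (k : nat) (a : R) : Rabs a < 1/2 ->
  floorR (INR k + a) = (Z.of_nat k - (if Rle_dec 0 a then 0 else 1))%Z /\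
  fracR (INR k + a) = kap a.
Proof.
  intro Ha. apply Rabs_def2 in Ha. unfold kap. rewrite INR_IZR_INZ.
  destruct (Rle_dec 0 a).
  - rewrite Z.sub_0_r. split.
    + apply ip_eq; lra.
    + rewrite (fr_eq _ (Z.of_nat k)); lra.
  - assert (E : IZR (Z.of_nat k - 1) = IZR (Z.of_nat k) - 1) by (rewrite minus_IZR; reflexivity).
    split.
    + apply ip_eq; rewrite E; lra.
    + rewrite (fr_eq _ (Z.of_nat k - 1)); rewrite ?E; lra.
Qed.

Ltac solve_iff H :=
  let H1 := fresh in let H2 := fresh in destruct H as [H1 H2]; split; intro Hz;
  first [lra | (assert (Hq := H1 ltac:(lra)); lra) | (assert (Hq := H2 ltac:(lra)); lra)].

Lemma pair_real (a b a' b' : R) :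
  Rabs a < 1/2 -> Rabs b < 1/2 -> Rabs a' < 1/2 -> Rabs b' < 1/2 ->
  (0 <= a <-> 0 <= a') -> (0 <= b <-> 0 <= b') ->
  ((kap a <= kap b <-> kap a' <= kap b') <-> (a <= b <-> a' <= b')).
Proof.
  intros Ha Hb Ha' Hb' Sa Sb.
  apply Rabs_def2 in Ha. apply Rabs_def2 in Hb. apply Rabs_def2 in Ha'. apply Rabs_def2 in Hb'.
  unfold kap.
  destruct (Rle_dec 0 a); destruct (Rle_dec 0 b); destruct (Rle_dec 0 a'); destruct (Rle_dec 0 b');
  try (exfalso; tauto);
  split; intro H; solve_iff H.
Qed.

Section S_H2.
Arguments strong_equiv {X}.
Variable X : Type.

Definition addv (c u : valuation X) : valuation X := fun x => c x + u x.

Definition T (u u' : valuation X) : Prop :=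
  (forall x y, u x <= u y <-> u' x <= u' y) /\
  (forall x, u x <= 0 <-> u' x <= 0) /\
  (forall x, 0 <= u x <-> 0 <= u' x).

Lemma T_sym u u' : T u u' -> T u' u.
Proof. intros [A [B C]]. split; [|split]; intros; [rewrite A|rewrite B|rewrite C]; tauto. Qed.

Definition small (u : valuation X) := forall x, Rabs (u x) < 1/2.

Lemma L1a (c u u' : valuation X) : integral c -> small u -> small u' ->
  strong_equiv (addv c u) (addv c u') -> T u u'.
Proof.
  intros Hc Hu Hu' [S1 S2].
  assert (Sg : forall x, (0 <= u x <-> 0 <= u' x) /\ (u x = 0 <-> u' x = 0)).
  { intro x. destruct (Hc x) as [k Hk]. destruct (S1 x) as [F1 F2].
    unfold addv in F1, F2. rewrite Hk in F1, F2.
    destruct (clock_small k (u x) (Hu x)) as [A1 A2].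
    destruct (clock_small k (u' x) (Hu' x)) as [B1 B2].
    rewrite A1, B1 in F1. rewrite A2, B2 in F2. unfold kap in F2.
    pose proof (Hu x) as G1. pose proof (Hu' x) as G2.
    apply Rabs_def2 in G1. apply Rabs_def2 in G2.
    destruct (Rle_dec 0 (u x)); destruct (Rle_dec 0 (u' x)); try lia.
    - split; [tauto|exact F2].
    - split; [tauto|]. split; intro; lra. }
  split; [|split].
  - intros x y. destruct (Sg x) as [Ax _]. destruct (Sg y) as [Ay _].
    apply (pair_real (u x) (u y) (u' x) (u' y) (Hu x) (Hu y) (Hu' x) (Hu' y) Ax Ay).
    pose proof (S2 x y) as Q. unfold addv in Q.
    destruct (Hc x) as [kx Hkx]. destruct (Hc y) as [ky Hky]. rewrite Hkx, Hky in Q.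
    rewrite (proj2 (clock_small kx (u x) (Hu x))), (proj2 (clock_small ky (u y) (Hu y))),
      (proj2 (clock_small kx (u' x) (Hu' x))), (proj2 (clock_small ky (u' y) (Hu' y))) in Q.
    exact Q.
  - intro x. destruct (Sg x) as [A B]. split; intro H.
    + destruct (Rle_dec 0 (u x)).
      * assert (u x = 0) by lra. assert (u' x = 0) by tauto. lra.
      * assert (~ 0 <= u' x) by tauto. lra.
    + destruct (Rle_dec 0 (u' x)).
      * assert (u' x = 0) by lra. assert (u x = 0) by tauto. lra.
      * assert (~ 0 <= u x) by tauto. lra.
  - intro x. apply (Sg x).
Qed.

Lemma L1b (c u u' : valuation X) : integral c -> small u -> small u' ->
  T u u' -> strong_equiv (addv c u) (addv c u').
Proof.
  intros Hc Hu Hu' [P1 [P2 P3]].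
  split.
  - intro x. destruct (Hc x) as [k Hk]. unfold addv. rewrite Hk.
    destruct (clock_small k (u x) (Hu x)) as [A1 A2].
    destruct (clock_small k (u' x) (Hu' x)) as [B1 B2].
    rewrite A1, B1, A2, B2. unfold kap.
    pose proof (Hu x) as G1. pose proof (Hu' x) as G2.
    apply Rabs_def2 in G1. apply Rabs_def2 in G2.
    pose proof (P2 x). pose proof (P3 x).
    destruct (Rle_dec 0 (u x)); destruct (Rle_dec 0 (u' x)); try tauto.
    + split; [reflexivity|]. split; intro; [assert (u x <= 0) by lra; assert (u' x <= 0) by tauto; lra
                                          |assert (u' x <= 0) by lra; assert (u x <= 0) by tauto; lra].
    + split; [reflexivity|]. split; intro; lra.
  - intros x y. unfold addv.
    destruct (Hc x) as [kx Hkx]. destruct (Hc y) as [ky Hky]. rewrite Hkx, Hky.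
    rewrite (proj2 (clock_small kx (u x) (Hu x))), (proj2 (clock_small ky (u y) (Hu y))),
      (proj2 (clock_small kx (u' x) (Hu' x))), (proj2 (clock_small ky (u' y) (Hu' y))).
    apply (pair_real (u x) (u y) (u' x) (u' y) (Hu x) (Hu y) (Hu' x) (Hu' y) (P3 x) (P3 y)).
    apply P1.
Qed.

End S_H2.
Arguments L1a {X}. Arguments L1b {X}. Arguments T_sym {X}.
Arguments addv {X}. Arguments T {X}. Arguments small {X}.


Lemma seg_clock (k : nat) (f : Z) (px qx : R) :
  IZR f <= px < IZR f + 1 -> IZR f <= qx < IZR f + 1 ->
  (px = IZR f <-> qx = IZR f) -> Rabs (INR k - qx) < 1/2 ->
  (INR k = IZR f /\ qx < IZR f + 1/2) \/
  (INR k = IZR f + 1 /\ px > IZR f /\ qx > IZR f + 1/2).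
Proof.
  intros Hp Hq Hiff Hk. apply Rabs_def2 in Hk. rewrite INR_IZR_INZ in *.
  assert (L1 : (Z.of_nat k - f < 2)%Z) by (apply lt_IZR; rewrite minus_IZR; lra).
  assert (L2 : (Z.of_nat k - f > -1)%Z) by (apply Z.lt_gt, lt_IZR; rewrite minus_IZR; lra).
  assert (Z.of_nat k = f \/ Z.of_nat k = f + 1)%Z as [E|E] by lia; rewrite E in *.
  - left. lra.
  - right. rewrite plus_IZR in *. split; [reflexivity|].
    split; [|lra]. destruct (Rle_lt_or_eq_dec _ _ (proj1 Hp)) as [|E2]; [lra|].
    symmetry in E2. apply Hiff in E2. lra.
Qed.

Section S_H3.
Variable X : Type.
Arguments strong_equiv {X}.

Lemma seg (M : nat) (r : region X) (c p : valuation X) (lam : R) :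
  is_region M r -> (forall v, r v -> forall x, v x <= INR M) ->
  integral c -> closure r c -> r p -> 0 < lam <= 1 ->
  r (fun x => c x + lam * (p x - c x)).
Proof.
  intros Hreg Hb Hc Hcl Hp Hl.
  destruct (Hcl (1/2) ltac:(lra)) as [q [Hq Hcq]].
  pose proof (same_region_strong _ _ _ _ Hreg Hp Hq (Hb _ Hp) (Hb _ Hq)) as [S1 S2].
  assert (Hpn : Defs.nonneg p) by (destruct Hreg as [b [_ Hr]]; apply Hr in Hp; tauto).
  set (v := fun x => c x + lam * (p x - c x)).
  assert (D : forall x,
    (floorR (v x) = floorR (p x) /\ fracR (v x) = lam * fracR (p x) /\ fracR (q x) < 1/2) \/
    (floorR (v x) = floorR (p x) /\ fracR (v x) = 1 - lam + lam * fracR (p x) /\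
      fracR (p x) > 0 /\ fracR (q x) > 1/2)).
  { intro x. destruct (Hc x) as [k Hk].
    set (f := floorR (p x)).
    pose proof (fl_base (p x)) as Bp. pose proof (fl_base (q x)) as Bq.
    destruct (S1 x) as [F1 F2]. fold f in F1, Bp. rewrite <- F1 in Bq.
    assert (Hiff : p x = IZR f <-> q x = IZR f).
    { rewrite !fr_def in F2. fold f in F2. rewrite <- F1 in F2. split; intro; lra. }
    assert (Hk2 : Rabs (INR k - q x) < 1/2) by (rewrite <- Hk; apply Hcq).
    assert (Ep : fracR (p x) = p x - IZR f) by (rewrite fr_def; reflexivity).
    assert (Eq : fracR (q x) = q x - IZR f) by (rewrite fr_def, <- F1; reflexivity).
    unfold v. rewrite Hk.
    destruct (seg_clock k f (p x) (q x) Bp Bq Hiff Hk2) as [[K1 K2]|[K1 [K2 K3]]];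
      rewrite K1.
    - left. assert (0 <= lam * (p x - IZR f) < 1).
      { split. apply Rmult_le_pos; lra.
        assert (lam * (p x - IZR f) <= 1 * (p x - IZR f)) by (apply Rmult_le_compat_r; lra). lra. }
      split; [|split].
      + apply ip_eq; lra.
      + rewrite (fr_eq _ f), Ep by lra; ring.
      + rewrite Eq; lra.
    - right. assert (0 < lam * (1 - (p x - IZR f)) <= 1 - (p x - IZR f)).
      { split. apply Rmult_lt_0_compat; lra.
        assert (lam * (1 - (p x - IZR f)) <= 1 * (1 - (p x - IZR f))) by (apply Rmult_le_compat_r; lra). lra. }
      split; [|split; [|split]].
      + apply ip_eq; lra.
      + rewrite (fr_eq _ f), Ep by lra; ring.
      + rewrite Ep; lra.
      + rewrite Eq; lra. }
  apply (region_mem _ _ _ _ Hreg Hp).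
  - split.
    + intro x. destruct (D x) as [[A1 [A2 _]]|[A1 [A2 [A3 _]]]]; split; try congruence; rewrite A2.
      * split; intro HH. rewrite HH; ring. apply Rmult_integral in HH. destruct HH; [lra|assumption].
      * split; intro HH; [lra|]. assert (0 < lam * fracR (p x)) by (apply Rmult_lt_0_compat; lra). lra.
    + intros x y.
      assert (Cr : forall a b, fracR (q a) < 1/2 -> fracR (q b) > 1/2 -> fracR (p a) < fracR (p b)).
      { intros a b Ha Hb'. destruct (Rlt_or_le (fracR (p a)) (fracR (p b))) as [|Hle]; [assumption|].
        apply S2 in Hle. lra. }
      pose proof (fl_base (p x)) as Bx. pose proof (fl_base (p y)) as By.
      assert (Fx : 0 <= fracR (p x) < 1) by (rewrite fr_def; lra).
      assert (Fy : 0 <= fracR (p y) < 1) by (rewrite fr_def; lra).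
      destruct (D x) as [[A1 [A2 A3]]|[A1 [A2 [A3 A4]]]]; destruct (D y) as [[B1 [B2 B3]]|[B1 [B2 [B3 B4]]]];
        rewrite A2, B2.
      * split; intro HH. apply Rmult_le_compat_l; lra. apply Rmult_le_reg_l in HH; lra.
      * pose proof (Cr x y A3 B4). split; intro HH; [|lra].
        assert (lam * fracR (p x) <= lam * fracR (p y)) by (apply Rmult_le_compat_l; lra). lra.
      * pose proof (Cr y x B3 A4). split; intro HH; [lra|].
        assert (lam * fracR (p y) < lam * fracR (p x)) by (apply Rmult_lt_compat_l; lra).
        exfalso. lra.
      * split; intro HH. assert (lam * fracR (p x) <= lam * fracR (p y)) by (apply Rmult_le_compat_l; lra). lra.
        assert (lam * fracR (p x) <= lam * fracR (p y)) by lra. apply Rmult_le_reg_l in H; lra.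
  - intro x. unfold v. destruct (Hc x) as [k Hk]. rewrite Hk. pose proof (pos_INR k). pose proof (Hpn x).
    replace (INR k + lam * (p x - INR k)) with ((1 - lam) * INR k + lam * p x) by ring.
    assert (0 <= (1 - lam) * INR k) by (apply Rmult_le_pos; lra).
    assert (0 <= lam * p x) by (apply Rmult_le_pos; lra). lra.
Qed.

End S_H3.
Arguments seg {X}.


Lemma abs_le (a k : R) : Rabs a <= k -> - k <= a <= k.
Proof. unfold Rabs; destruct (Rcase_abs a); lra. Qed.

Section Sep.
Variable Y : Type.
Variables G G' : Y -> R.
Variable t' : R.

Fixpoint lo (b : R) (L : list Y) : R :=
  match L with
  | nil => b
  | y :: L' => if Rlt_dec (G' y) t' then Rmax (G y) (lo b L') else lo b L'
  end.

Fixpoint hi (b : R) (L : list Y) : R :=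
  match L with
  | nil => b
  | y :: L' => if Rlt_dec t' (G' y) then Rmin (G y) (hi b L') else hi b L'
  end.

Lemma lo_ge b L : b <= lo b L /\ forall y, In y L -> G' y < t' -> G y <= lo b L.
Proof.
  induction L as [|a L [IH1 IH2]]; simpl.
  - split; [lra|tauto].
  - destruct (Rlt_dec (G' a) t').
    + split. eapply Rle_trans; [exact IH1|apply Rmax_r].
      intros y [E|Hy] Hl. subst; apply Rmax_l. eapply Rle_trans; [apply IH2; auto|apply Rmax_r].
    + split; [exact IH1|]. intros y [E|Hy] Hl. subst; tauto. auto.
Qed.

Lemma lo_lt b L z : b < z -> (forall y, In y L -> G' y < t' -> G y < z) -> lo b L < z.
Proof.
  intros Hb H. induction L as [|a L IH]; simpl; [exact Hb|].
  destruct (Rlt_dec (G' a) t').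
  - apply Rmax_lub_lt; [apply H; simpl; auto|apply IH; intros; apply H; simpl; auto].
  - apply IH; intros; apply H; simpl; auto.
Qed.

Lemma hi_le b L : hi b L <= b /\ forall y, In y L -> t' < G' y -> hi b L <= G y.
Proof.
  induction L as [|a L [IH1 IH2]]; simpl.
  - split; [lra|tauto].
  - destruct (Rlt_dec t' (G' a)).
    + split. eapply Rle_trans; [apply Rmin_r|exact IH1].
      intros y [E|Hy] Hl. subst; apply Rmin_l. eapply Rle_trans; [apply Rmin_r|apply IH2; auto].
    + split; [exact IH1|]. intros y [E|Hy] Hl. subst; tauto. auto.
Qed.

Lemma hi_gt b L z : z < b -> (forall y, In y L -> t' < G' y -> z < G y) -> z < hi b L.
Proof.
  intros Hb H. induction L as [|a L IH]; simpl; [exact Hb|].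
  destruct (Rlt_dec t' (G' a)).
  - apply Rmin_glb_lt; [apply H; simpl; auto|apply IH; intros; apply H; simpl; auto].
  - apply IH; intros; apply H; simpl; auto.
Qed.

Lemma sep (ys : list Y) (Hys : forall y, In y ys)
  (HGG : forall y1 y2, G y1 <= G y2 <-> G' y1 <= G' y2)
  (k : R) (Hk : 0 < k) (HB : forall y, Rabs (G y) <= k) :
  exists t, Rabs t <= 2 * k /\ forall y, (G y <= t <-> G' y <= t') /\ (t <= G y <-> t' <= G' y).
Proof.
  destruct (classic (exists y0, G' y0 = t')) as [[y0 E]|NE].
  - exists (G y0). split. pose proof (HB y0). lra.
    intro y. rewrite <- E. split; apply HGG.
  - set (l := lo (- (2 * k)) ys). set (h := hi (2 * k) ys).
    assert (Hlh : l < h).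
    { apply lo_lt.
      - apply hi_gt; [lra|]. intros y _ _. pose proof (HB y) as Q. apply abs_le in Q. lra.
      - intros y _ Hy. apply hi_gt.
        + pose proof (HB y) as Q. apply abs_le in Q. lra.
        + intros y2 _ Hy2. destruct (Rlt_or_le (G y) (G y2)) as [|Q]; [assumption|].
          apply HGG in Q. lra. }
    destruct (lo_ge (- (2 * k)) ys) as [L1 L2]. destruct (hi_le (2 * k) ys) as [U1 U2].
    fold l in L1, L2. fold h in U1, U2.
    exists ((l + h) / 2). split.
    + apply Rabs_le. lra.
    + intro y. destruct (Rtotal_order (G' y) t') as [Hy|[Hy|Hy]].
      * pose proof (L2 y (Hys y) Hy). split; split; intro; lra.
      * exfalso. apply NE. eauto.
      * pose proof (U2 y (Hys y) Hy). split; split; intro; lra.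
Qed.

End Sep.


Lemma region_equiv_refl (X : Type) M (b : valuation X) : region_equiv M b b.
Proof. split. intro x. right. split; [reflexivity|tauto]. intros; tauto. Qed.

Lemma closure_bound (X : Type) (M : nat) (r : region X) c v :
  is_region M r -> (forall w, r w -> forall x, w x <= INR M) -> closure r c -> r v ->
  forall x, Rabs (v x - c x) <= INR M + 1.
Proof.
  intros [b [_ Hr]] Hb Hcl Hv x.
  destruct (Hcl 1 ltac:(lra)) as [q [Hq Hcq]].
  pose proof (Hcq x) as Q. apply Rabs_def2 in Q.
  pose proof (Hb _ Hq x). pose proof (Hb _ Hv x).
  assert (0 <= q x) by (apply Hr in Hq; apply (proj1 Hq)).
  assert (0 <= v x) by (apply Hr in Hv; apply (proj1 Hv)).
  apply Rabs_le. lra.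
Qed.

Fixpoint SW (w : nat -> R) (k : nat) : R :=
  match k with O => 0 | S m => SW w m + w m end.

Lemma SW_nonneg w k : (forall i, 0 <= w i) -> 0 <= SW w k.
Proof. intro H. induction k; simpl; [lra|]. pose proof (H k). lra. Qed.

Lemma pw_ext (X St : Type) (G : wtg X St) k s t d1 d2 :
  (forall i, (i < k)%nat -> d1 i = d2 i) -> play_weight G k s t d1 = play_weight G k s t d2.
Proof.
  induction k; intro H; simpl; [reflexivity|].
  rewrite IHk by (intros; apply H; lia). rewrite H by lia. reflexivity.
Qed.

Lemma scaled_bound (lam B a : R) : 0 < lam -> Rabs a <= B -> Rabs (lam * a) <= lam * B.
Proof. intros Hl Ha. rewrite Rabs_mult, (Rabs_pos_eq lam) by lra. apply Rmult_le_compat_l; lra. Qed.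

Theorem lemma1 (X St : Type) (G : wtg X St)
  (HX : exists l : list X, forall x, In x l)
  (HG : well_formed G)
  (n : nat) (s : nat -> St) (r : nat -> region X) (t : nat -> trans X St)
  (Hcyc : is_cycle G n s r t)
  (nub : nat -> valuation X) (db : nat -> R)
  (Hplay : is_play G true n s t nub db)
  (Hcorners : follows_corners G n r t nub db)
  (H0 : corner (r O) (nub O)) (Hn : corner (r O) (nub n)) :
  forall eps, eps > 0 ->
    exists (nu : nat -> valuation X) (d : nat -> R),
      is_play G false n s t nu d /\ follows n r nu /\
      Rabs (play_weight G n s t d - play_weight G n s t db) <= eps.
Proof.
  intros eps Heps.
  destruct Hcyc as [Hreg [Hrt [Hsn Hrn]]].
  set (M := Defs.bound G).
  destruct HX as [l Hl].
  destruct l as [|x0 l'].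
  { exists nub, db. split; [|split].
    - intros i Hi. destruct (Hplay i Hi) as [A1 [A2 [A3 [A4 [A5 A6]]]]].
      refine (conj A1 (conj A2 (conj A3 (conj A4 (conj _ A6))))).
      intros [[x o] cc] _. destruct (Hl x).
    - intros i Hi. destruct (Hreg i Hi) as [b [_ Hr]]. apply Hr.
      split; [intro x; destruct (Hl x)|]. split; intro x; destruct (Hl x).
    - unfold Rminus. rewrite Rplus_opp_r, Rabs_R0. lra. }
  destruct (Nat.eq_dec n 0) as [En|Hn1].
  { subst n. destruct (Hreg 0%nat (le_n 0)) as [b [Hbn Hr]].
    exists (fun _ => b), db. split; [|split].
    - intros i Hi. lia.
    - intros i Hi. assert (i = 0%nat) by lia. subst i. apply Hr. split; [exact Hbn|apply region_equiv_refl].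
    - simpl. unfold Rminus. rewrite Rplus_opp_r, Rabs_R0. lra. }
  assert (Hstep : forall i, (i < n)%nat -> step G true (s i) (nub i) (db i) (t i) (s (S i)) (nub (S i))) by exact Hplay.
  assert (Bg : forall i, (i < n)%nat -> forall v, sat (tguard (t i)) v -> forall x, v x <= INR M).
  { intros i Hi v Hv x. destruct (Hstep i Hi) as [A1 _]. exact (proj2 HG _ A1 v Hv x). }
  assert (Breg : forall i, (i <= n)%nat -> forall v, r i v -> forall x, v x <= INR M).
  { assert (Hpos : forall i, (1 <= i <= n)%nat -> forall v, r i v -> forall x, v x <= INR M).
    { intros i Hi v Hv x. destruct i as [|j]; [lia|].
      destruct (Hcorners j ltac:(lia)) as [r2 [_ [_ [Hgd [Hiff _]]]]].
      apply Hiff in Hv. destruct Hv as [w [Hw ->]]. unfold reset.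
      destruct (treset (t j) x). apply pos_INR. exact (Bg j ltac:(lia) w (Hgd w Hw) x). }
    intros i Hi v Hv x. destruct i as [|j].
    - rewrite <- Hrn in Hv. apply (Hpos n); [lia|exact Hv].
    - apply (Hpos (S j)); [lia|exact Hv]. }
  assert (HM : 0 <= INR M) by apply pos_INR.
  assert (STEP : forall k, (k < n)%nat -> forall (g : valuation X) (kp : R), 0 < kp -> 3 * kp <= 1/4 ->
     r k (addv (nub k) g) -> (forall x, Rabs (g x) <= kp) ->
     exists h, Rabs h <= 2 * kp /\ db k + h >= 0 /\
       sat (tguard (t k)) (elapse (addv (nub k) g) (db k + h)) /\
       r (S k) (reset (elapse (addv (nub k) g) (db k + h)) (treset (t k))) /\
       forall x, Rabs (reset (elapse (addv (nub k) g) (db k + h)) (treset (t k)) x - nub (S k) x) <= 3 * kp).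
  { intros k Hk g kp Hkp Hkp3 Hg Hgb.
    destruct (Hcorners k Hk) as [r2 [Hr2 [[v [e [Hv [He Hve]]]] [Hgd [Hiff [Hcl1 [Hcl2 [Hcl3 [Hi1 [Hi2 Hi3]]]]]]]]]].
    destruct (Hstep k Hk) as [_ [_ [_ [Hdb [_ Hnext]]]]].
    set (c := nub k) in *.
    set (a := elapse c (db k)) in *.
    assert (B2 : forall w, r2 w -> forall x, w x <= INR M) by (intros w Hw; apply (Bg k Hk); apply Hgd; exact Hw).
    assert (Bk : forall w, r k w -> forall x, w x <= INR M) by (apply Breg; lia).
    assert (Hrk : is_region M (r k)) by (apply Hreg; lia).
    set (lam := 1 / (4 * (INR M + 1))).
    assert (Elam : lam * (INR M + 1) = 1/4) by (unfold lam; field; lra).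
    assert (Hlam0 : 0 < lam) by (unfold lam; apply Rdiv_lt_0_compat; lra).
    assert (Hlam : 0 < lam <= 1) by (split; [exact Hlam0|nra]).
    set (g' := fun x => lam * (v x - c x)).
    assert (P1 : r k (addv c g')) by exact (seg M (r k) c v lam Hrk Bk Hi1 Hcl1 Hv Hlam).
    assert (Sg' : forall x, Rabs (g' x) <= 1/4).
    { intro x. unfold g'. rewrite <- Elam. apply scaled_bound; [exact Hlam0|].
      exact (closure_bound X M (r k) c v Hrk Bk Hcl1 Hv x). }
    assert (Sg : small g) by (intro x; pose proof (Hgb x); lra).
    assert (HT : T g g').
    { apply (L1a c g g' Hi1 Sg); [intro x; pose proof (Sg' x); lra|].
      exact (same_region_strong M (r k) _ _ Hrk Hg P1 (Bk _ Hg) (Bk _ P1)). }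
    set (h' := lam * (e - db k)).
    set (u' := fun x => g' x + h').
    assert (P2 : r2 (addv a u')).
    { assert (Q := seg M r2 a (elapse v e) lam Hr2 B2 Hi2 Hcl2 Hve Hlam).
      replace (addv a u') with (fun x => a x + lam * (elapse v e x - a x)); [exact Q|].
      apply functional_extensionality; intro x. unfold addv, u', g', h', a, elapse. ring. }
    assert (Su' : forall x, Rabs (u' x) <= 1/4).
    { intro x. replace (u' x) with (lam * (elapse v e x - a x)) by (unfold u', g', h', a, elapse; ring).
      rewrite <- Elam. apply scaled_bound; [exact Hlam0|].
      exact (closure_bound X M r2 a (elapse v e) Hr2 B2 Hcl2 Hve x). }
    destruct (sep (option X) (fun y => match y with None => 0 | Some x => g x end)
                (fun y => match y with None => 0 | Some x => g' x end) (- h')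
                (None :: map Some (x0 :: l'))) with (k := kp) as [tt [Htt Ht]].
    { intros [y|]; [right; apply in_map; apply Hl|left; reflexivity]. }
    { destruct HT as [T1 [T2 T3]]. intros [y1|] [y2|]; simpl; [apply T1|apply T2|apply T3|tauto]. }
    { exact Hkp. }
    { intros [y|]; simpl; [apply Hgb|rewrite Rabs_R0; lra]. }
    set (h := - tt).
    set (u := fun x => g x + h).
    assert (HT2 : T u u').
    { destruct HT as [T1 _]. split; [|split].
      - intros x y. pose proof (T1 x y) as Q. unfold u, u'.
        split; intro Z; [assert (g' x <= g' y) by (apply Q; lra)|assert (g x <= g y) by (apply Q; lra)]; lra.
      - intro x. destruct (Ht (Some x)) as [Q _]. simpl in Q. unfold u, u', h.
        split; intro Z; [assert (g' x <= - h') by (apply Q; lra)|assert (g x <= tt) by (apply Q; lra)]; lra.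
      - intro x. destruct (Ht (Some x)) as [_ Q]. simpl in Q. unfold u, u', h.
        split; intro Z; [assert (- h' <= g' x) by (apply Q; lra)|assert (tt <= g x) by (apply Q; lra)]; lra. }
    assert (Habs : Rabs h <= 2 * kp) by (unfold h; rewrite Rabs_Ropp; exact Htt).
    assert (Su : forall x, Rabs (u x) <= 3 * kp).
    { intro x. unfold u. eapply Rle_trans; [apply Rabs_triang|]. pose proof (Hgb x). lra. }
    assert (SE : strong_equiv (addv a u') (addv a u)).
    { apply (L1b a u' u Hi2); [intro x; pose proof (Su' x); lra|intro x; pose proof (Su x); lra|].
      apply T_sym; exact HT2. }
    assert (NN : Defs.nonneg (addv a u)).
    { intro x. unfold addv. destruct (Hi2 x) as [ka Hka]. rewrite Hka.
      assert (N2 : 0 <= a x + u' x).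
      { destruct Hr2 as [b [_ Hr]]. apply Hr in P2. apply (proj1 P2 x). }
      rewrite Hka in N2. pose proof (pos_INR ka).
      destruct HT2 as [_ [_ T3]].
      destruct (Rle_dec 0 (u x)); [lra|].
      assert (u' x < 0) by (destruct (Rle_dec 0 (u' x)); [exfalso; apply n0; apply T3; assumption|lra]).
      assert (1 <= INR ka) by (apply INR_pos_ge1; lra).
      pose proof (Su x) as Q. apply abs_le in Q. lra. }
    assert (P3 : r2 (addv a u)) by exact (region_mem M r2 _ _ Hr2 P2 SE NN).
    assert (Eq : elapse (addv c g) (db k + h) = addv a u).
    { apply functional_extensionality; intro x. unfold addv, u, a, elapse. ring. }
    exists h. rewrite Eq. split; [exact Habs|split; [|split; [|split]]].
    - destruct (Rle_lt_or_eq_dec 0 (db k) (Rge_le _ _ Hdb)) as [Dpos|Dz].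
      + destruct (Hi1 x0) as [k1 K1]. destruct (Hi2 x0) as [k2 K2].
        assert (Ea : a x0 = c x0 + db k) by reflexivity.
        assert (Hlt : (k1 < k2)%nat) by (apply INR_lt; lra).
        assert (INR (S k1) <= INR k2) by (apply le_INR; lia).
        rewrite S_INR in H. apply abs_le in Habs. lra.
      + assert (Hh' : 0 <= h') by (unfold h'; rewrite <- Dz; apply Rmult_le_pos; lra).
        destruct (Ht None) as [_ Q]. simpl in Q.
        assert (tt <= 0) by (apply Q; lra). unfold h. lra.
    - apply Hgd. exact P3.
    - apply Hiff. exists (addv a u). split; [exact P3|reflexivity].
    - intro x. rewrite Hnext. unfold reset. destruct (treset (t k) x).
      + unfold Rminus. rewrite Rplus_opp_r, Rabs_R0. lra.
      + replace (addv a u x - a x) with (u x) by (unfold addv; ring). apply Su. }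
  set (w := fun i => Rabs (IZR (wstate G (s i)))).
  assert (Hw0 : forall i, 0 <= w i) by (intro; apply Rabs_pos).
  assert (HSW : 0 <= SW w n) by (apply SW_nonneg; exact Hw0).
  set (m0 := Rmin (1/4) (eps / (2 * (SW w n + 1)))).
  assert (Hm0 : 0 < m0) by (unfold m0; apply Rmin_glb_lt; [lra| apply Rdiv_lt_0_compat; lra]).
  assert (Hm1 : m0 <= 1/4) by apply Rmin_l.
  assert (Hm2 : m0 <= eps / (2 * (SW w n + 1))) by apply Rmin_r.
  assert (H3n : 0 < 3 ^ n) by (apply pow_lt; lra).
  set (K0 := m0 / 3 ^ n).
  assert (HK0 : 0 < K0) by (unfold K0; apply Rdiv_lt_0_compat; lra).
  set (kk := fun k => K0 * 3 ^ k).
  assert (Hkpos : forall k, 0 < kk k) by (intro; unfold kk; apply Rmult_lt_0_compat; [lra| apply pow_lt; lra]).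
  assert (Hkn : kk n = m0) by (unfold kk, K0; field; lra).
  assert (Hkle : forall k, (k <= n)%nat -> kk k <= kk n).
  { intros k Hk. unfold kk. apply Rmult_le_compat_l; [lra|]. apply Rle_pow; [lra|exact Hk]. }
  assert (HkS : forall k, kk (S k) = 3 * kk k) by (intro; unfold kk; simpl; ring).
  assert (IND : forall k, (k <= n)%nat -> exists (nu : nat -> valuation X) (d : nat -> R),
     (forall i, (i < k)%nat -> step G false (s i) (nu i) (d i) (t i) (s (S i)) (nu (S i))) /\
     (forall i, (i <= k)%nat -> r i (nu i)) /\
     (forall x, Rabs (nu k x - nub k x) <= kk k) /\
     Rabs (play_weight G k s t d - play_weight G k s t db) <= 2 * kk k * SW w k).
  { induction k as [|k IH]; intro Hkn'.
    - assert (R0 : is_region M (r 0%nat)) by (apply Hreg; lia).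
      destruct (Hreg 0%nat ltac:(lia)) as [b [Hbn Hr]].
      assert (Hb : r 0%nat b) by (apply Hr; split; [exact Hbn|apply region_equiv_refl]).
      set (lam0 := kk 0%nat / (INR M + 1)).
      assert (El : lam0 * (INR M + 1) = kk 0%nat) by (unfold lam0; field; lra).
      assert (Hl0 : 0 < lam0) by (unfold lam0; apply Rdiv_lt_0_compat; [apply Hkpos|lra]).
      assert (Hk0 : kk 0%nat <= 1/4) by (pose proof (Hkle 0%nat ltac:(lia)); lra).
      assert (Hlam : 0 < lam0 <= 1) by (split; [exact Hl0|nra]).
      assert (B0 : forall w, r 0%nat w -> forall x, w x <= INR M) by (apply Breg; lia).
      pose proof (seg M (r 0%nat) (nub 0%nat) b lam0 R0 B0 (proj2 H0) (proj1 H0) Hb Hlam) as P.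
      set (nu0 := fun x => nub 0%nat x + lam0 * (b x - nub 0%nat x)) in P.
      exists (fun _ => nu0), db. split; [|split; [|split]].
      + intros i Hi. lia.
      + intros i Hi. assert (i = 0%nat) by lia. subst i. exact P.
      + intro x. unfold nu0. replace (nub 0%nat x + lam0 * (b x - nub 0%nat x) - nub 0%nat x)
          with (lam0 * (b x - nub 0%nat x)) by ring.
        rewrite <- El. apply scaled_bound; [exact Hl0|].
        exact (closure_bound X M (r 0%nat) (nub 0%nat) b R0 B0 (proj1 H0) Hb x).
      + simpl. unfold Rminus. rewrite Rplus_opp_r, Rabs_R0. lra.
    - destruct (IH ltac:(lia)) as [nu [d [Hs [Hf [Hb Hwt]]]]].
      set (g := fun x => nu k x - nub k x).
      assert (Eg : addv (nub k) g = nu k) by (apply functional_extensionality; intro; unfold addv, g; ring).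
      assert (Hk3 : 3 * kk k <= 1/4) by (rewrite <- HkS; pose proof (Hkle (S k) Hkn'); lra).
      assert (Hgr : r k (addv (nub k) g)) by (rewrite Eg; apply Hf; lia).
      destruct (STEP k ltac:(lia) g (kk k) (Hkpos k) Hk3 Hgr ltac:(intro x; apply Hb))
        as [h [Hh [Hd [Hsat [Hrn' Hbd]]]]].
      rewrite Eg in Hsat, Hrn', Hbd.
      set (newv := reset (elapse (nu k) (db k + h)) (treset (t k))) in *.
      assert (E1 : Nat.eqb k k = true) by apply Nat.eqb_refl.
      assert (E2 : Nat.eqb (S k) (S k) = true) by apply Nat.eqb_refl.
      assert (E3 : Nat.eqb k (S k) = false) by (apply Nat.eqb_neq; lia).
      exists (fun i => if Nat.eqb i (S k) then newv else nu i), (fun i => if Nat.eqb i k then db k + h else d i).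
      split; [|split; [|split]].
      + intros i Hi. cbv beta. destruct (Nat.eq_dec i k) as [->|Hne].
        * rewrite E1, E2, E3.
          destruct (Hstep k ltac:(lia)) as [A1 [A2 [A3 _]]].
          exact (conj A1 (conj A2 (conj A3 (conj Hd (conj Hsat eq_refl))))).
        * assert (F1 : Nat.eqb i k = false) by (apply Nat.eqb_neq; lia).
          assert (F2 : Nat.eqb i (S k) = false) by (apply Nat.eqb_neq; lia).
          assert (F3 : Nat.eqb (S i) (S k) = false) by (apply Nat.eqb_neq; lia).
          rewrite F1, F2, F3. apply Hs. lia.
      + intros i Hi. cbv beta. destruct (Nat.eqb i (S k)) eqn:E. apply Nat.eqb_eq in E. subst i. exact Hrn'.
        apply Nat.eqb_neq in E. apply Hf. lia.
      + intro x. cbv beta. rewrite E2. rewrite HkS. apply Hbd.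
      + simpl play_weight. cbv beta. rewrite E1.
        rewrite (pw_ext X St G k s t (fun i => if Nat.eqb i k then db k + h else d i) d).
        2:{ intros i Hi. assert (F1 : Nat.eqb i k = false) by (apply Nat.eqb_neq; lia). rewrite F1. reflexivity. }
        set (W := IZR (wstate G (s k))).
        replace (play_weight G k s t d + ((db k + h) * W + IZR (wtrans G (t k))) -
                 (play_weight G k s t db + (db k * W + IZR (wtrans G (t k)))))
          with ((play_weight G k s t d - play_weight G k s t db) + h * W) by ring.
        eapply Rle_trans; [apply Rabs_triang|]. rewrite Rabs_mult.
        assert (Hwk : Rabs W = w k) by reflexivity. rewrite Hwk.
        assert (Rabs h * w k <= 2 * kk k * w k) by (apply Rmult_le_compat_r; [apply Hw0|exact Hh]).
        rewrite HkS. simpl SW.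
        pose proof (SW_nonneg w k Hw0). pose proof (Hkpos k). pose proof (Hw0 k).
        assert (0 <= kk k * SW w k) by (apply Rmult_le_pos; lra).
        assert (0 <= kk k * w k) by (apply Rmult_le_pos; lra).
        nra. }
  destruct (IND n (le_n n)) as [nu [d [Hs [Hf [_ Hwt]]]]].
  exists nu, d. split; [exact Hs|split; [exact Hf|]].
  eapply Rle_trans; [exact Hwt|]. rewrite Hkn.
  set (S0 := SW w n) in *.
  set (q := eps / (2 * (S0 + 1))) in *.
  assert (Eq : q * (2 * (S0 + 1)) = eps) by (unfold q; field; lra).
  assert (m0 * S0 <= q * S0) by (apply Rmult_le_compat_r; lra).
  assert (0 <= q) by (unfold q; apply Rlt_le, Rdiv_lt_0_compat; lra).
  nra.
Qed.
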